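(* For integers $k\ge 0$, $n\ge1$, and variables $\lambda_1,\dots,\lambda_n$, let $$p_k(\lambda_1,\dots,\lambda_n)=(1-\lambda_1)\cdots(1-\lambda_n)\sum_{\alpha\in\mathbb Z_{\ge0}^n,\ 0\le|\alpha|<k}\lambda^\alpha,$$ where $\lambda^\alpha=\lambda_1^{\alpha_1}\cdots\lambda_n^{\alpha_n}$ and $|\alpha|=\alpha_1+\dots+\alpha_n$. For nonnegative integers $m,n,\ell$ put $$a_{mn\ell}=p_m(q^n,q^{n+1},\dots,q^{n+\ell})\in\mathbb Z[q].$$ Then $a_{mn\ell}=a_{nm\ell}$. *)

(* Defs.v *)
From mathcomp Require Import all_boot all_order all_algebra.
Set Implicit Arguments. Unset Strict Implicit. Unset Printing Implicit Defensive.
Import GRing.Theory.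
Local Open Scope ring_scope.

(* Since |alpha| < k forces each alpha_i < k, alpha ranges over {ffun 'I_N -> 'I_k}
   with the constraint |alpha| < k. *)
Definition pk (R : comNzRingType) (N k : nat) (lam : 'I_N -> R) : R :=
  (\prod_(i < N) (1 - lam i)) *
  \sum_(alpha : {ffun 'I_N -> 'I_k} | (\sum_(i < N) (alpha i : nat) < k)%N)
     \prod_(i < N) lam i ^+ (alpha i).

Definition a_mnl (m n l : nat) : {poly int} :=
  pk m (fun i : 'I_l.+1 => 'X^(n + i)).

(* Main.v *)
Require Import Defs.
From mathcomp Require Import all_boot all_order all_algebra.
From mathcomp Require Import zify ring.
Set Implicit Arguments. Unset Strict Implicit. Unset Printing Implicit Defensive.
Import GRing.Theory.
Local Open Scope ring_scope.

Definition fcons (T : finType) N (x : T) (g : {ffun 'I_N -> T}) : {ffun 'I_N.+1 -> T} :=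
  [ffun i => if unlift ord0 i is Some j then g j else x].

Lemma sum_ffunS (R : nmodType) (T : finType) N (P : pred {ffun 'I_N.+1 -> T})
   (F : {ffun 'I_N.+1 -> T} -> R) :
  \sum_(f | P f) F f = \sum_(x : T) \sum_(g : {ffun 'I_N -> T} | P (fcons x g)) F (fcons x g).
Proof.
rewrite [RHS]pair_big_dep /=.
rewrite (reindex (fun p : T * {ffun 'I_N -> T} => fcons p.1 p.2)) /=.
  by apply: eq_bigl => -[x g].
apply: onW_bij.
exists (fun f : {ffun 'I_N.+1 -> T} => (f ord0, [ffun j => f (lift ord0 j)])).
  move=> [x g] /=; rewrite /fcons ffunE unlift_none; congr pair.
  by apply/ffunP => j; rewrite !ffunE liftK.
move=> f /=; apply/ffunP => i; rewrite /fcons ffunE.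
by case: unliftP => [j ->|->] //; rewrite ffunE.
Qed.

Section S.
Variable R : comNzRingType.

Lemma fcons0 (T : finType) N x (g : {ffun 'I_N -> T}) : fcons x g ord0 = x.
Proof. by rewrite /fcons ffunE unlift_none. Qed.
Lemma fconsS (T : finType) N x (g : {ffun 'I_N -> T}) i : fcons x g (lift ord0 i) = g i.
Proof. by rewrite /fcons ffunE liftK. Qed.

Lemma sum_fcons k N (x : 'I_k) g :
  (\sum_(i < N.+1) (fcons x g i : nat) = x + \sum_(i < N) (g i : nat))%N.
Proof. rewrite big_ord_recl fcons0; congr addn; apply: eq_bigr => i _; by rewrite fconsS. Qed.

Lemma prod_fcons (lam : nat -> R) k N (x : 'I_k) g :
  \prod_(i < N.+1) lam (nat_of_ord i) ^+ fcons x g i =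
  lam 0%N ^+ x * \prod_(i < N) lam i.+1 ^+ g i.
Proof. rewrite big_ord_recl fcons0; congr (_ * _); apply: eq_bigr => i _; by rewrite fconsS lift0. Qed.
Fixpoint Sn (N : nat) (lam : nat -> R) (b : nat) : R :=
  match N with
  | 0 => (0 < b)%N%:R
  | N'.+1 => \sum_(a < b) lam 0%N ^+ a * Sn N' (fun i => lam i.+1) (b - a)
  end.

Lemma Sn_ext N lam lam' b : (forall i, lam i = lam' i) -> Sn N lam b = Sn N lam' b.
Proof.
elim: N lam lam' b => [//|N IH] lam lam' b H /=.
by apply: eq_bigr => a _; rewrite H (IH _ (fun i => lam' i.+1)).
Qed.

Lemma Sn0 N lam : Sn N lam 0 = 0.
Proof. by case: N => [|N] /=; rewrite ?big_ord0. Qed.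

Lemma Sn_rec N lam b :
  Sn N.+1 lam b.+1 = Sn N (fun i => lam i.+1) b.+1 + lam 0%N * Sn N.+1 lam b.
Proof.
rewrite /= big_ord_recl /= expr0 mul1r subn0; congr (_ + _).
rewrite mulr_sumr; apply: eq_bigr => a _.
by rewrite ?lift0 subSS exprS mulrA.
Qed.

Lemma sum_ffun_Sn N k b (lam : nat -> R) : (b <= k)%N ->
  \sum_(alpha : {ffun 'I_N -> 'I_k} | (\sum_(i < N) (alpha i : nat) < b)%N)
      \prod_(i < N) lam (nat_of_ord i) ^+ alpha i = Sn N lam b.
Proof.
elim: N lam b => [|N IH] lam b hb.
  rewrite /=; under eq_bigl do rewrite big_ord0.
  case: b hb => [|b] hb /=.
    by rewrite big_pred0.
  under eq_bigr do rewrite big_ord0.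
  by rewrite big_mkcond /= sumr_const card_ffun !card_ord expn0.
rewrite sum_ffunS /=.
rewrite (big_ord_widen _ (fun x => lam 0%N ^+ x * Sn N (fun i => lam i.+1) (b - x)) hb).
rewrite [RHS]big_mkcond /=; apply: eq_bigr => x _.
rewrite (eq_bigl (fun g : {ffun 'I_N -> 'I_k} => \sum_(i < N) (g i : nat) < b - x)%N); last first.
  by move=> g; rewrite sum_fcons ltn_subRL.
rewrite (eq_bigr (fun g : {ffun 'I_N -> 'I_k} => lam 0%N ^+ x * \prod_(i < N) lam i.+1 ^+ g i)); last first.
  by move=> g _; rewrite prod_fcons.
rewrite -mulr_sumr (IH (fun i => lam i.+1)); last by rewrite (leq_trans (leq_subr _ _) hb).
by case: ifP => // /negbT; rewrite -leqNgt -subn_eq0 => /eqP ->; rewrite Sn0 mulr0.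
Qed.
End S.

Definition Q (l x : nat) : {poly int} := \prod_(i < l) (1 - 'X^(x + i)).
Definition V (l m n : nat) : {poly int} := \sum_(j < m) 'X^(n * j) * Q l j.+1.

Lemma Q_recr l x : Q l.+1 x = Q l x * (1 - 'X^(x + l)).
Proof. by rewrite /Q big_ord_recr. Qed.

Lemma Q_recl l x : Q l.+1 x = (1 - 'X^x) * Q l x.+1.
Proof.
rewrite /Q big_ord_recl /= addn0; congr (_ * _); apply: eq_bigr => i _.
by rewrite ?lift0 addnS addSn.
Qed.

Lemma V_S l m n : V l m.+1 n = V l m n + 'X^(n * m) * Q l m.+1.
Proof. by rewrite /V big_ord_recr. Qed.

Lemma Vrec l n m : V l.+1 m.+1 n = (1 - 'X^(1 + l)) * V l m.+1 n.+1 + 'X^n * V l.+1 m n.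
Proof.
elim: m => [|m IH].
  rewrite /V !big_ord_recr !big_ord0 /= !muln0 expr0 Q_recr; ring.
rewrite (V_S l.+1 m.+1 n) {1}IH (V_S l.+1 m n) (V_S l m.+1 n.+1).
rewrite Q_recr (Q_recl l m.+1).
have e1 : 'X^(n.+1 * m.+1) = 'X^(n * m.+1) * 'X^(m.+1) :> {poly int}
  by rewrite mulSn exprD mulrC.
have e2 : 'X^n * 'X^(n * m) = 'X^(n * m.+1) :> {poly int} by rewrite -exprD mulnS.
have e3 : 'X^(m.+2 + l) = 'X^(m.+1) * 'X^(1 + l) :> {poly int}
  by rewrite -exprD addnA addn1.
rewrite e1 e3 -e2.
ring.
Qed.

Lemma closed l : forall n m, Q l 1 * Sn l.+1 (fun i => 'X^(n + i)) m = V l m n.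
Proof.
elim: l => [|l IHl] n m.
  rewrite /Q big_ord0 mul1r /V /=; apply: eq_bigr => a _.
  rewrite subn_gt0 ltn_ord mulr1 /Q big_ord0 mulr1 addn0 exprM //.
elim: m => [|m IHm].
  by rewrite Sn0 mulr0 /V big_ord0.
rewrite Sn_rec (@Sn_ext _ _ _ (fun i => 'X^(n.+1 + i))); last by move=> i; rewrite addnS.
rewrite mulrDr [X in _ + X]mulrCA IHm Q_recr (mulrC (Q l 1)) -mulrA IHl Vrec addn0.
by rewrite add1n.
Qed.

Definition e (l j k : nat) : {poly int} :=
  Q l j.+1 * Q l k.+1 * 'X^(j * k) * ('X^j + 'X^k - 1 - 'X^(j + k + l.+1)).

Lemma e_sym l j k : e l j k = e l k j.
Proof. rewrite /e mulnC (addnC j k); ring. Qed.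

Lemma G l j n : Q l.+1 n * ('X^(n * j) * Q l j.+1) = \sum_(k < n) e l j k.
Proof.
elim: n => [|n IH].
  by rewrite big_ord0 /Q big_ord_recl /= add0n expr0 subrr !mul0r.
rewrite (big_ord_recr n) /= -IH /e Q_recr (Q_recl l n).
have e1 : 'X^(n.+1 * j) = 'X^j * 'X^(n * j) :> {poly int} by rewrite mulSn exprD.
have e2 : 'X^(j + n + l.+1) = 'X^j * 'X^(n.+1 + l) :> {poly int}
  by rewrite -exprD; congr (_ ^+ _); lia.
rewrite e1 e2 (mulnC j n); ring.
Qed.

Lemma sym_main l m n : Q l.+1 n * V l m n = \sum_(j < m) \sum_(k < n) e l j k.
Proof. rewrite /V mulr_sumr; apply: eq_bigr => j _; exact: G. Qed.

Lemma Q_neq0 l : Q l 1 != 0.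
Proof.
apply/prodf_neq0 => i _; apply/negP => /eqP H.
have := congr1 (fun p : {poly int} => p.[0]) H.
rewrite /= !hornerE add1n exprS mul0r subr0.
by move/eqP; rewrite oner_eq0.
Qed.

Lemma a_closed l m n : Q l 1 * a_mnl m n l = \sum_(j < m) \sum_(k < n) e l j k.
Proof.
rewrite /a_mnl /pk (@sum_ffun_Sn _ l.+1 m m (fun i => 'X^(n + i)) (leqnn m)).
by rewrite mulrCA closed -sym_main.
Qed.

Theorem lemma6p1 (m n l : nat) : a_mnl m n l = a_mnl n m l.
Proof.
apply: (mulfI (Q_neq0 l)); rewrite !a_closed exchange_big /=.
by apply: eq_bigr => j _; apply: eq_bigr => k _; rewrite e_sym.
Qed.
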